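(* Let $R$ be a $K$-algebra with an ideal $J$ such that $J$ and $R/J$ are both locally unit-regular. Then $R$ is locally unit-regular if and only if for every idempotent $e \in R$, every unit of the unital algebra $eRe/eJe$ lifts to a unit of $eRe$ (i.e., is the image of a unit of $eRe$ under the quotient map $eRe \to eRe/eJe$).
   Context: $K$ is a field; algebras are associative, not necessarily unital; ideals are two-sided and $K$-subspaces. For an idempotent $e$, $eRe$ is a unital algebra with identity $e$, and $eJe$ is an ideal of it. A unital ring $S$ is unit-regular if for each $x\in S$ there is a unit $u$ of $S$ with $xux = x$. A $K$-algebra $R$ is locally unit-regular if every finite subset of $R$ is contained in a $K$-subalgebra of $R$ that has its own identity element and is unit-regular. *)

(* Defs.v *)
From HB Require Import structures.
From mathcomp Require Import all_boot all_order all_algebra.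
Set Implicit Arguments. Unset Strict Implicit. Unset Printing Implicit Defensive.
Import GRing.Theory.
Local Open Scope ring_scope.

Record nualg (K : fieldType) := NUAlg {
  nua_sort :> lmodType K;
  nua_mul : nua_sort -> nua_sort -> nua_sort;
  nua_mulA : forall x y z, nua_mul x (nua_mul y z) = nua_mul (nua_mul x y) z;
  nua_mulDl : forall x y z, nua_mul (x + y) z = nua_mul x z + nua_mul y z;
  nua_mulDr : forall x y z, nua_mul x (y + z) = nua_mul x y + nua_mul x z;
  nua_mulZl : forall (a : K) x y, nua_mul (a *: x) y = a *: nua_mul x y;
  nua_mulZr : forall (a : K) x y, nua_mul x (a *: y) = a *: nua_mul x y
}.

Notation "x ⋅ y" := (@nua_mul _ _ x y) (at level 40, left associativity).

Section Defs.
Variables (K : fieldType) (R : nualg K).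

Definition is_subalg (S : R -> Prop) : Prop :=
  [/\ S 0, (forall x y, S x -> S y -> S (x + y)),
      (forall (a : K) x, S x -> S (a *: x)) &
      (forall x y, S x -> S y -> S (x ⋅ y))].

Definition is_ideal (J : R -> Prop) : Prop :=
  [/\ J 0, (forall x y, J x -> J y -> J (x + y)),
      (forall (a : K) x, J x -> J (a *: x)) &
      (forall r x, J x -> J (r ⋅ x) /\ J (x ⋅ r))].

Definition is_identity_of (S : R -> Prop) (e : R) : Prop :=
  S e /\ forall x, S x -> e ⋅ x = x /\ x ⋅ e = x.

Definition unit_regular_with (S : R -> Prop) (e : R) : Prop :=
  forall x, S x -> exists u v, [/\ S u, S v, u ⋅ v = e, v ⋅ u = e & x ⋅ u ⋅ x = x].

Definition locally_unit_regular_in (A : R -> Prop) : Prop :=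
  forall s : seq R, (forall x, x \in s -> A x) ->
    exists S : R -> Prop,
      [/\ is_subalg S, (forall x, S x -> A x), (forall x, x \in s -> S x) &
          exists e, is_identity_of S e /\ unit_regular_with S e].

Definition locally_unit_regular : Prop := locally_unit_regular_in (fun _ => True).

Definition corner (e : R) : R -> Prop := fun z => exists r, z = e ⋅ r ⋅ e.
Definition corner_in (J : R -> Prop) (e : R) : R -> Prop :=
  fun z => exists j, J j /\ z = e ⋅ j ⋅ e.

(* A unit of eRe/eJe is the
   class of some x in eRe for which there is y in eRe with xy - e and yx - e
   in eJe; it lifts if some unit u of eRe (inverse v in eRe) satisfies
   u - x in eJe, i.e. u maps to the class of x. *)
Definition units_lift (J : R -> Prop) (e : R) : Prop :=
  forall x y, corner e x -> corner e y ->
    corner_in J e (x ⋅ y - e) -> corner_in J e (y ⋅ x - e) ->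
    exists u v, [/\ corner e u, corner e v, u ⋅ v = e, v ⋅ u = e &
                    corner_in J e (u - x)].

End Defs.

(* pi : R -> Q is a surjective K-algebra homomorphism with kernel J, i.e.
   Q together with pi is (a copy of) the quotient algebra R/J. *)
Definition is_quotient_map (K : fieldType) (R Q : nualg K) (J : R -> Prop)
    (pi : R -> Q) : Prop :=
  [/\ (forall x y, pi (x + y) = pi x + pi y),
      (forall (a : K) x, pi (a *: x) = a *: pi x),
      (forall x y, pi (x ⋅ y) = pi x ⋅ pi y),
      (forall q, exists x, pi x = q) &
      (forall x, pi x = 0 <-> J x)].

(* Main.v *)
Require Import Defs.
From mathcomp Require Import all_boot all_order all_algebra.
Set Implicit Arguments. Unset Strict Implicit. Unset Printing Implicit Defensive.
Import GRing.Theory.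
Local Open Scope ring_scope.

Section Gen.
Variables (K : fieldType) (A : nualg K).
Implicit Types x y z : A.

Lemma mA x y z : x ⋅ (y ⋅ z) = x ⋅ y ⋅ z. Proof. exact: nua_mulA. Qed.
Lemma mDl x y z : (x + y) ⋅ z = x ⋅ z + y ⋅ z. Proof. exact: nua_mulDl. Qed.
Lemma mDr x y z : x ⋅ (y + z) = x ⋅ y + x ⋅ z. Proof. exact: nua_mulDr. Qed.
Lemma m0l x : (0:A) ⋅ x = 0.
Proof. have h := mDl 0 0 x; rewrite addr0 in h. by apply: (addrI (0 ⋅ x)); rewrite -h addr0. Qed.
Lemma m0r x : x ⋅ (0:A) = 0.
Proof. have h := mDr x 0 0; rewrite addr0 in h. by apply: (addrI (x ⋅ 0)); rewrite -h addr0. Qed.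
Lemma mNl x y : (- x) ⋅ y = - (x ⋅ y).
Proof. by apply/eqP; rewrite -addr_eq0 -mDl addNr m0l. Qed.
Lemma mNr x y : x ⋅ (- y) = - (x ⋅ y).
Proof. by apply/eqP; rewrite -addr_eq0 -mDr addNr m0r. Qed.
Lemma mBl x y z : (x - y) ⋅ z = x ⋅ z - y ⋅ z. Proof. by rewrite mDl mNl. Qed.
Lemma mBr x y z : x ⋅ (y - z) = x ⋅ y - x ⋅ z. Proof. by rewrite mDr mNr. Qed.
Lemma lext (a b c : A) : a ⋅ b = c -> forall w, w ⋅ a ⋅ b = w ⋅ c.
Proof. by move=> H w; rewrite -mA H. Qed.

Lemma lext3 (a b c d : A) : a ⋅ b ⋅ c = d -> forall w, w ⋅ a ⋅ b ⋅ c = w ⋅ d.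
Proof. by move=> H w; rewrite -H !mA. Qed.

Lemma lu_alg (P Q r t : A) : P ⋅ P = P -> Q ⋅ Q = Q -> r = Q - Q ⋅ P -> r ⋅ t ⋅ r = r ->
  [/\ (P + (t ⋅ r - P ⋅ t ⋅ r)) ⋅ (P + (t ⋅ r - P ⋅ t ⋅ r)) = P + (t ⋅ r - P ⋅ t ⋅ r),
      (P + (t ⋅ r - P ⋅ t ⋅ r)) ⋅ P = P & Q ⋅ (P + (t ⋅ r - P ⋅ t ⋅ r)) = Q].
Proof.
move=> PP QQ rE rtr.
have rP : r ⋅ P = 0 by rewrite rE mBl (lext PP) subrr.
set m := t ⋅ r - P ⋅ t ⋅ r.
have Pm : P ⋅ m = 0 by rewrite /m mBr !mA PP subrr.
have mP : m ⋅ P = 0 by rewrite /m mBl !(lext rP) !m0r subrr.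
have rm : r ⋅ m = r by rewrite /m mBr !mA rtr rP !m0l subr0.
have mm : m ⋅ m = m by rewrite {1}/m mBl !(lext rm).
have Qm : Q ⋅ m = r.
  have := rtr; rewrite {1}rE !mBl => <-.
  by rewrite /m mBr !mA.
clearbody m.
split.
- by rewrite !mDl !mDr PP Pm mP mm addr0 add0r.
- by rewrite mDl PP mP addr0.
- by rewrite mDr Qm rE addrC subrK.
Qed.

Lemma sub_0 (S : A -> Prop) : is_subalg S -> S 0. Proof. by move=> [h0 hD hZ hM]. Qed.
Lemma sub_D (S : A -> Prop) x y : is_subalg S -> S x -> S y -> S (x + y). Proof. by move=> [h0 hD hZ hM]; apply: hD. Qed.
Lemma sub_Z (S : A -> Prop) a x : is_subalg S -> S x -> S (a *: x). Proof. by move=> [h0 hD hZ hM]; apply: hZ. Qed.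
Lemma sub_M (S : A -> Prop) x y : is_subalg S -> S x -> S y -> S (x ⋅ y). Proof. by move=> [h0 hD hZ hM]; apply: hM. Qed.
Lemma sub_N (S : A -> Prop) x : is_subalg S -> S x -> S (- x).
Proof. by move=> h hx; rewrite -scaleN1r; exact: (sub_Z _ h hx). Qed.
Lemma sub_B (S : A -> Prop) x y : is_subalg S -> S x -> S y -> S (x - y).
Proof. by move=> h hx hy; apply: sub_D => //; apply: sub_N. Qed.


Lemma corner_ur (T : A -> Prop) (t f x : A) :
  is_subalg T -> is_identity_of T t -> unit_regular_with T t ->
  T f -> f ⋅ f = f -> T x -> f ⋅ x ⋅ f = x ->
  exists W W', [/\ T W, T W', f ⋅ W ⋅ f = W, f ⋅ W' ⋅ f = W' &
     [/\ W ⋅ W' = f, W' ⋅ W = f & x ⋅ W ⋅ x = x]].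
Proof.
move=> hT [Tt tid] hur Tf ff Tx fxf.
have tl z : T z -> t ⋅ z = z by move=> /tid [].
have tr z : T z -> z ⋅ t = z by move=> /tid [].
set f' := t - f.
have Tf' : T f' by apply: sub_B.
have tE : t = f + f' by rewrite /f' addrC subrK.
have ff' : f ⋅ f' = 0 by rewrite /f' mBr ff tr // subrr.
have f'f : f' ⋅ f = 0 by rewrite /f' mBl ff tl // subrr.
have f'f' : f' ⋅ f' = f' by rewrite {1}/f' mBl ff' subr0 tl.
have fx : f ⋅ x = x by rewrite -{1}fxf !mA ff fxf.
have xf : x ⋅ f = x by rewrite -{1}fxf -mA ff fxf.
have f'x : f' ⋅ x = 0 by rewrite /f' mBl tl // fx subrr.
have xf' : x ⋅ f' = 0 by rewrite /f' mBr tr // xf subrr.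
set y := x + f'.
have Ty : T y by apply: sub_D.
have f'y : f' ⋅ y = f' by rewrite /y mDr f'x f'f' add0r.
have yf' : y ⋅ f' = f' by rewrite /y mDl xf' f'f' add0r.
have fy : f ⋅ y = x by rewrite /y mDr fx ff' addr0.
have yf : y ⋅ f = x by rewrite /y mDl xf f'f addr0.
have [u [v [Tu Tv uv vu yuy]]] := hur y Ty.
have f'uf' : f' ⋅ u ⋅ f' = f'.
  have := congr1 (fun w => f' ⋅ w ⋅ f') yuy => /=.
  by rewrite !mA f'y (lext yf') f'f'.
have f'uf'x w : w ⋅ f' ⋅ u ⋅ f' = w ⋅ f' by rewrite -[in RHS]f'uf' !mA.
have xuf' : x ⋅ u ⋅ f' = 0.
  have := congr1 (fun w => f ⋅ w ⋅ f') yuy => /=.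
  by rewrite !mA fy (lext yf') xf'.
have f'ux : f' ⋅ u ⋅ x = 0.
  have := congr1 (fun w => f' ⋅ w ⋅ f) yuy => /=.
  by rewrite !mA f'y (lext yf) f'f.
have xux : x ⋅ u ⋅ x = x.
  have := congr1 (fun w => f ⋅ w ⋅ f) yuy => /=.
  by rewrite !mA fy (lext yf) xf.
exists (f ⋅ u ⋅ f - f ⋅ u ⋅ f' ⋅ u ⋅ f), (f ⋅ v ⋅ f).
have TM a b : T a -> T b -> T (a ⋅ b) by apply: sub_M.
split.
- by apply: (sub_B hT); repeat apply: (TM).
- by repeat apply: (TM).
- by rewrite mBr mBl !mA ff !(lext ff).
- by rewrite !mA ff !(lext ff).
split.
- have e1 : f ⋅ u ⋅ f' ⋅ u ⋅ t ⋅ v ⋅ f = 0.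
    by rewrite (lext (tr _ Tu)) (lext uv) (lext (tr _ Tf')) (lext f'f) m0r.
  rewrite tE mDr !mDl ?mA f'uf'x in e1.
  have e2 : f ⋅ u ⋅ t ⋅ v ⋅ f = f.
    by rewrite (lext (tr _ Tu)) (lext uv) (tr _ Tf) ff.
  rewrite tE mDr !mDl ?mA in e2.
  have k1 : f ⋅ u ⋅ f' ⋅ u ⋅ f ⋅ v ⋅ f = - (f ⋅ u ⋅ f' ⋅ v ⋅ f).
    by apply/eqP; rewrite -addr_eq0 e1.
  by rewrite mBl !mA !(lext ff) k1 opprK.
- have e3 : f ⋅ v ⋅ t ⋅ u ⋅ f' = 0.
    by rewrite (lext (tr _ Tv)) (lext vu) (tr _ Tf) ff'.
  rewrite tE mDr !mDl ?mA f'uf'x in e3.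
  have e4 : f ⋅ v ⋅ t ⋅ u ⋅ f = f.
    by rewrite (lext (tr _ Tv)) (lext vu) (tr _ Tf) ff.
  rewrite tE mDr !mDl ?mA in e4.
  have k2 : f ⋅ v ⋅ f ⋅ u ⋅ f' = - (f ⋅ v ⋅ f').
    by apply/eqP; rewrite -addr_eq0 e3.
  by rewrite mBr !mA !(lext ff) k2 !mNl opprK.
- by rewrite mBr mBl !mA xf (lext fx) xux xuf' !m0l subr0.
Qed.

End Gen.

Section Main.
Variables (K : fieldType) (R : nualg K) (J : R -> Prop) (Q : nualg K) (pi : R -> Q).
Hypotheses (hJ : is_ideal J) (hpi : is_quotient_map J pi)
  (lurJ : locally_unit_regular_in J) (lurQ : locally_unit_regular Q).

Lemma piD x y : pi (x + y) = pi x + pi y. Proof. by case: hpi. Qed.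
Lemma piZ a x : pi (a *: x) = a *: pi x. Proof. by case: hpi. Qed.
Lemma piM x y : pi (x ⋅ y) = pi x ⋅ pi y. Proof. by case: hpi. Qed.
Lemma piS q : exists x, pi x = q. Proof. by case: hpi. Qed.
Lemma piK x : pi x = 0 <-> J x. Proof. by case: hpi. Qed.
Lemma pi0 : pi 0 = 0.
Proof. by apply: (addrI (pi 0)); rewrite -piD !addr0. Qed.
Lemma piN x : pi (- x) = - pi x.
Proof. by apply/eqP; rewrite -addr_eq0 -piD addNr pi0. Qed.
Lemma piB x y : pi (x - y) = pi x - pi y. Proof. by rewrite piD piN. Qed.

Lemma J0 : J 0. Proof. by case: hJ. Qed.
Lemma JD x y : J x -> J y -> J (x + y). Proof. by case: hJ => _ h _ _; apply: h. Qed.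
Lemma JZ a x : J x -> J (a *: x). Proof. by case: hJ => _ _ h _; apply: h. Qed.
Lemma JN x : J x -> J (- x). Proof. by move=> hx; rewrite -scaleN1r; apply: JZ. Qed.
Lemma JB x y : J x -> J y -> J (x - y). Proof. by move=> hx hy; apply: JD => //; apply: JN. Qed.
Lemma JMl r x : J x -> J (r ⋅ x). Proof. by move=> Jx; case: hJ => _ _ _ h; case: (h r x Jx). Qed.
Lemma JMr r x : J x -> J (x ⋅ r). Proof. by move=> Jx; case: hJ => _ _ _ h; case: (h r x Jx). Qed.

Lemma kJ (s : seq R) : (forall x, x \in s -> J x) ->
  exists k, J k /\ forall x, x \in s -> k ⋅ x = x /\ x ⋅ k = x.
Proof.
move=> hs; have [S [_ SJ sS [k [[Sk kid] _]]]] := lurJ hs.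
by exists k; split; [apply: SJ | move=> x /sS /kid].
Qed.

Lemma regJ x : J x -> exists t, x ⋅ t ⋅ x = x.
Proof.
move=> Jx.
have hs : forall z, z \in [:: x] -> J z by move=> z; rewrite inE => /eqP ->.
have [S [_ _ sS [k [_ ur]]]] := lurJ hs.
have [u [v [_ _ _ _ h]]] := ur x (sS x (mem_head _ _)).
by exists u.
Qed.

Lemma regR (x : R) : exists y, x ⋅ y ⋅ x = x.
Proof.
have [T [hT _ sT [t [_ ur]]]] := @lurQ [:: pi x] (fun _ _ => I).
have [ub [vb [Tu _ _ _ hx]]] := ur (pi x) (sT _ (mem_head _ _)).
have [u0 hu0] := piS ub.
set z := x - x ⋅ u0 ⋅ x.
have Jz : J z by apply/piK; rewrite /z piB !piM hu0 hx subrr.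
have [t0 ztz] := regJ Jz.
set m := t0 - u0 ⋅ x ⋅ t0.
have xm : x ⋅ m = z ⋅ t0 by rewrite /m /z mBr mBl !mA.
exists (u0 + m - m ⋅ x ⋅ u0).
have e : z ⋅ t0 ⋅ (x - x ⋅ u0 ⋅ x) = z by [].
rewrite mBr !mA in e.
rewrite mBr mBl mDr mDl !mA xm -addrA e /z addrC subrK.
done.
Qed.


Lemma lu_corner (f k aL aR : R) : f ⋅ f = f -> J k -> f ⋅ aL = aL -> k ⋅ aL = aL ->
  aR ⋅ f = aR -> aR ⋅ k = aR ->
  exists h, [/\ J h, f ⋅ h = h, h ⋅ f = h, h ⋅ h = h & h ⋅ aL = aL /\ aR ⋅ h = aR].
Proof.
move=> ff Jk faL kaL aRf aRk.
set c := f ⋅ k ⋅ f.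
have Jc : J c by apply: JMr; apply: JMl.
have caL : c ⋅ aL = aL by rewrite /c (lext faL) (lext kaL) faL.
have aRc : aR ⋅ c = aR by rewrite /c !mA aRf aRk aRf.
have cf : c ⋅ f = c by rewrite /c -mA ff.
have fc : f ⋅ c = c by rewrite /c !mA ff.
clearbody c.
have [y0 hy0] := regR c.
set y := f ⋅ y0 ⋅ f.
have cyc : c ⋅ y ⋅ c = c by rewrite /y !mA cf (lext fc) hy0.
have fy : f ⋅ y = y by rewrite /y !mA ff.
have yf : y ⋅ f = y by rewrite /y -mA ff.
clearbody y.
set P := c ⋅ y. set Qq := y ⋅ c.
have PP : P ⋅ P = P by rewrite /P mA cyc.
have QQ : Qq ⋅ Qq = Qq by rewrite /Qq !mA (lext3 cyc).
have PaL : P ⋅ aL = aL by rewrite /P -[in LHS]caL mA cyc caL.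
have aRQ : aR ⋅ Qq = aR by rewrite /Qq -[in LHS]aRc !mA (lext3 cyc) aRc.
have JP : J P by apply: JMr.
have JQ : J Qq by apply: JMl.
have fP : f ⋅ P = P by rewrite /P mA fc.
have Pf : P ⋅ f = P by rewrite /P -mA yf.
have fQ : f ⋅ Qq = Qq by rewrite /Qq mA fy.
have Qf : Qq ⋅ f = Qq by rewrite /Qq -mA cf.
clearbody P Qq.
set r := Qq - Qq ⋅ P.
have Jr : J r by apply: JB => //; apply: JMr.
have fr : f ⋅ r = r by rewrite /r mBr mA fQ.
have rf : r ⋅ f = r by rewrite /r mBl -mA Pf Qf.
have rE : r = Qq - Qq ⋅ P by [].
clearbody r.
have [t0 ht0] := regR r.
set t := f ⋅ t0 ⋅ f.
have rtr : r ⋅ t ⋅ r = r by rewrite /t !mA rf (lext fr) ht0.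
have ft : f ⋅ t = t by rewrite /t !mA ff.
clearbody t.
have [hh hP Qh] := lu_alg PP QQ rE rtr.
exists (P + (t ⋅ r - P ⋅ t ⋅ r)); split.
- by apply: JD => //; apply: JB; [apply: JMl | apply: JMl].
- by rewrite mDr mBr !mA fP ft.
- by rewrite mDl mBl Pf !(lext rf).
- exact: hh.
split.
- by rewrite -[in LHS]PaL mA hP.
- by rewrite -[in LHS]aRQ -mA Qh.
Qed.


Lemma idem_unit (s : seq R) :
  exists e, e ⋅ e = e /\ forall a, a \in s -> e ⋅ a = a /\ a ⋅ e = a.
Proof.
have [T [hT _ sT [t [[Tt tid] _]]]] := @lurQ [seq pi a | a <- s] (fun _ _ => I).
have Tpa a : a \in s -> T (pi a) by move=> ha; apply: sT; apply: map_f.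
have [c0 hc0] := piS t.
set l := [seq a - c0 ⋅ a | a <- s] ++ [seq a - a ⋅ c0 | a <- s].
have hl : forall z, z \in l -> J z.
  move=> z; rewrite mem_cat => /orP [] /mapP [a ha ->]; apply/piK; rewrite piB piM hc0.
    by have [-> _] := tid _ (Tpa a ha); rewrite subrr.
  by have [_ ->] := tid _ (Tpa a ha); rewrite subrr.
have [k [Jk hk]] := kJ hl.
have kL a : a \in s -> k ⋅ (a - c0 ⋅ a) = a - c0 ⋅ a.
  by move=> ha; have /hk [-> _] : a - c0 ⋅ a \in l by rewrite mem_cat; apply/orP; left; apply/mapP; exists a.
have kR a : a \in s -> (a - a ⋅ c0) ⋅ k = a - a ⋅ c0.
  by move=> ha; have /hk [_ ->] : a - a ⋅ c0 \in l by rewrite mem_cat; apply/orP; right; apply/mapP; exists a.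
set cL := c0 + k - k ⋅ c0.
set cR := c0 + k - c0 ⋅ k.
have cLa a : a \in s -> cL ⋅ a = a.
  move=> ha; have := kL a ha; rewrite mBr mA => h.
  by rewrite /cL mBl mDl -addrA h addrC subrK.
have acR a : a \in s -> a ⋅ cR = a.
  move=> ha; have := kR a ha; rewrite mBl => h.
  by rewrite /cR mBr mDr !mA -addrA h addrC subrK.
clearbody cL cR.
have [yL hyL] := regR cL.
have [yR hyR] := regR cR.
set P := cL ⋅ yL. set Qq := yR ⋅ cR.
have PP : P ⋅ P = P by rewrite /P mA hyL.
have QQ : Qq ⋅ Qq = Qq by rewrite /Qq !mA (lext3 hyR).
have Pa a : a \in s -> P ⋅ a = a.
  by move=> ha; rewrite /P -[in LHS](cLa a ha) mA hyL (cLa a ha).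
have aQ a : a \in s -> a ⋅ Qq = a.
  by move=> ha; rewrite /Qq -[in LHS](acR a ha) !mA (lext3 hyR) (acR a ha).
clearbody P Qq.
set r := Qq - Qq ⋅ P.
have rE : r = Qq - Qq ⋅ P by [].
clearbody r.
have [t1 ht1] := regR r.
have [hh hP Qh] := lu_alg PP QQ rE ht1.
exists (P + (t1 ⋅ r - P ⋅ t1 ⋅ r)); split => // a ha; split.
- by rewrite -[in LHS](Pa a ha) mA hP (Pa a ha).
- by rewrite -[in LHS](aQ a ha) -mA Qh (aQ a ha).
Qed.


Lemma core (UL : forall e : R, e ⋅ e = e -> units_lift J e) (e : R) (ee : e ⋅ e = e)
  (T : Q -> Prop) (t : Q) (hT : is_subalg T) (Tt : T t)
  (tid : forall z, T z -> t ⋅ z = z /\ z ⋅ t = z) (ur : unit_regular_with T t)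
  (Te : T (pi e)) (x : R) (hx : e ⋅ x ⋅ e = x) (Tx : T (pi x)) :
  exists u v, [/\ e ⋅ u ⋅ e = u /\ T (pi u), e ⋅ v ⋅ e = v /\ T (pi v),
                 u ⋅ v = e, v ⋅ u = e & x ⋅ u ⋅ x = x].
Proof.
have ex : e ⋅ x = x by rewrite -[in LHS]hx !mA ee hx.
have xe : x ⋅ e = x by rewrite -[in LHS]hx -mA ee hx.
have pee : pi e ⋅ pi e = pi e by rewrite -piM ee.
have pxe : pi e ⋅ pi x ⋅ pi e = pi x by rewrite -!piM hx.
have [Wb [Wb' [TW TW' fW fW' [WW' W'W xWx]]]] :=
  corner_ur hT (conj Tt tid) ur Te pee Tx pxe.
have eWb : pi e ⋅ Wb = Wb by rewrite -[in LHS]fW !mA pee fW.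
have Wbe : Wb ⋅ pi e = Wb by rewrite -[in LHS]fW -mA pee fW.
have eWb' : pi e ⋅ Wb' = Wb' by rewrite -[in LHS]fW' !mA pee fW'.
have Wbe' : Wb' ⋅ pi e = Wb' by rewrite -[in LHS]fW' -mA pee fW'.
have [w0 hw0] := piS Wb.
have [w0' hw0'] := piS Wb'.
have [w1 w1E] : {w1 | w1 = e ⋅ w0 ⋅ e} by exists (e ⋅ w0 ⋅ e).
have [w1' w1E'] : {w1' | w1' = e ⋅ w0' ⋅ e} by exists (e ⋅ w0' ⋅ e).
have pw1 : pi w1 = Wb by rewrite w1E !piM hw0 fW.
have pw1' : pi w1' = Wb' by rewrite w1E' !piM hw0' fW'.
have ew1 : e ⋅ w1 = w1 by rewrite w1E !mA ee.
have w1e : w1 ⋅ e = w1 by rewrite w1E -mA ee.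
have ew1' : e ⋅ w1' = w1' by rewrite w1E' !mA ee.
have w1e' : w1' ⋅ e = w1' by rewrite w1E' -mA ee.
have cw1 : corner e w1 by exists w0.
have cw1' : corner e w1' by exists w0'.
have ci1 : corner_in J e (w1 ⋅ w1' - e).
  exists (w1 ⋅ w1' - e); split.
    by apply/piK; rewrite piB piM pw1 pw1' WW' subrr.
  by rewrite mBr mBl !mA ew1 (lext w1e') !ee.
have ci2 : corner_in J e (w1' ⋅ w1 - e).
  exists (w1' ⋅ w1 - e); split.
    by apply/piK; rewrite piB piM pw1 pw1' W'W subrr.
  by rewrite mBr mBl !mA ew1' (lext w1e) !ee.
have [u1 [v1 [[ru hu1] [rv hv1] u1v1 v1u1 [j [Jj hj]]]]] := UL e ee w1 w1' cw1 cw1' ci1 ci2.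
have eu1 : e ⋅ u1 = u1 by rewrite hu1 !mA ee.
have u1e : u1 ⋅ e = u1 by rewrite hu1 -mA ee.
have ev1 : e ⋅ v1 = v1 by rewrite hv1 !mA ee.
have v1e : v1 ⋅ e = v1 by rewrite hv1 -mA ee.
have pj : pi j = 0 by apply/piK.
have pu1 : pi u1 = Wb.
  have := congr1 pi hj; rewrite piB !piM pj m0r m0l pw1 => /eqP.
  by rewrite subr_eq0 => /eqP.
have pv1 : pi v1 = Wb'.
  have h1 := congr1 (fun z => pi (z ⋅ w1')) v1u1; simpl in h1.
  by rewrite !piM pu1 pw1' (lext WW') eWb' -piM v1e in h1.
have [p pdef] : {p | p = x ⋅ u1} by exists (x ⋅ u1).
have ep : e ⋅ p = p by rewrite pdef mA ex.
have pe : p ⋅ e = p by rewrite pdef -mA u1e.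
have [b bdef] : {b | b = p - p ⋅ p} by exists (p - p ⋅ p).
have Jb : J b.
  apply/piK; rewrite bdef pdef piB !piM pu1 !mA xWx subrr.
  done.
have eb : e ⋅ b = b by rewrite bdef mBr mA ep.
have be : b ⋅ e = b by rewrite bdef mBl pe -mA pe.
have pp : p ⋅ p = p - b by rewrite bdef opprB addrC subrK.
have pb : p ⋅ b = b ⋅ p by rewrite bdef mBr mBl !mA.
have [y0 hy0] := regR b.
have [y ydef] : {y | y = y0 ⋅ b ⋅ y0} by exists (y0 ⋅ b ⋅ y0).
have byb : b ⋅ y ⋅ b = b by rewrite ydef !mA !hy0.
have yby : y ⋅ b ⋅ y = y by rewrite ydef !mA !(lext3 hy0).
have [Qq Qdef] : {Qq | Qq = y ⋅ b} by exists (y ⋅ b).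
have QQ : Qq ⋅ Qq = Qq by rewrite Qdef mA yby.
have bQ : b ⋅ Qq = b by rewrite Qdef mA byb.
have Qe : Qq ⋅ e = Qq by rewrite Qdef -mA be.
have QpQ : Qq ⋅ p ⋅ Qq = Qq ⋅ p.
  by rewrite Qdef !mA (lext (esym pb)) !mA (lext3 byb).
have [g gdef] : {g | g = p - p ⋅ Qq} by exists (p - p ⋅ Qq).
have [i idef] : {i | i = p ⋅ Qq} by exists (p ⋅ Qq).
have Ji : J i by rewrite idef Qdef; apply: JMl; apply: JMl.
have pgi : p = g + i by rewrite gdef idef subrK.
have gg : g ⋅ g = g.
  rewrite gdef mBl !mBr !mA (lext3 QpQ) mA subrr subr0 pp mBl bQ.
  by rewrite opprB addrA subrK.
have eg : e ⋅ g = g by rewrite gdef mBr mA ep.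
have ge : g ⋅ e = g by rewrite gdef mBl pe -mA Qe.
have ei : e ⋅ i = i by rewrite idef mA ep.
have ie : i ⋅ e = i by rewrite idef -mA Qe.
clear gdef idef.
have [g' g'def] : {g' | g' = e - g} by exists (e - g).
have g'g' : g' ⋅ g' = g' by rewrite g'def mBl !mBr ee eg ge gg subrr subr0.
have gg' : g ⋅ g' = 0 by rewrite g'def mBr ge gg subrr.
have g'g : g' ⋅ g = 0 by rewrite g'def mBl eg gg subrr.
have eg' : e ⋅ g' = g' by rewrite g'def mBr ee eg.
have g'e : g' ⋅ e = g' by rewrite g'def mBl ee ge.
have iE : i = g ⋅ i + g' ⋅ i by rewrite -mDl g'def addrC subrK ei.
have iE' : i = i ⋅ g + i ⋅ g' by rewrite -mDr g'def addrC subrK ie.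
have hl : forall z, z \in [:: g ⋅ i; i ⋅ g; g' ⋅ i; i ⋅ g'] -> J z.
  move=> z; rewrite !inE => /or4P [] /eqP ->.
  - exact: JMl.
  - exact: JMr.
  - exact: JMl.
  - exact: JMr.
have [k [Jk hk]] := kJ hl.
have := hk (g ⋅ i); rewrite !inE eqxx => /(_ isT) [k1 _].
have := hk (i ⋅ g); rewrite !inE eqxx ?orbT => /(_ isT) [_ k2].
have := hk (g' ⋅ i); rewrite !inE eqxx ?orbT => /(_ isT) [k3 _].
have := hk (i ⋅ g'); rewrite !inE eqxx ?orbT => /(_ isT) [_ k4].
have a1 : g ⋅ (g ⋅ i) = g ⋅ i by rewrite mA gg.
have a2 : i ⋅ g ⋅ g = i ⋅ g by rewrite -mA gg.
have a3 : g' ⋅ (g' ⋅ i) = g' ⋅ i by rewrite mA g'g'.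
have a4 : i ⋅ g' ⋅ g' = i ⋅ g' by rewrite -mA g'g'.
have [h1 [Jh1 gh1 h1g h1h1 [h1L h1R]]] := lu_corner gg Jk a1 k1 a2 k2.
have [h2 [Jh2 gh2 h2g h2h2 [h2L h2R]]] := lu_corner g'g' Jk a3 k3 a4 k4.
have h1g' : h1 ⋅ g' = 0 by rewrite -h1g -mA gg' m0r.
have g'h1 : g' ⋅ h1 = 0 by rewrite -gh1 mA g'g m0l.
have h2g0 : h2 ⋅ g = 0 by rewrite -h2g -mA g'g m0r.
have gh20 : g ⋅ h2 = 0 by rewrite -gh2 mA gg' m0l.
have h1h2 : h1 ⋅ h2 = 0 by rewrite -h1g -mA gh20 m0r.
have h2h1 : h2 ⋅ h1 = 0 by rewrite -h2g -mA g'h1 m0r.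
have [h hdef] : {h | h = h1 + h2} by exists (h1 + h2).
have hh : h ⋅ h = h by rewrite hdef mDl !mDr h1h1 h1h2 h2h1 h2h2 addr0 add0r.
have Jh : J h by rewrite hdef; apply: JD.
have eh : e ⋅ h = h.
  have e1 : e ⋅ h1 = h1 by rewrite -gh1 mA eg.
  have e2 : e ⋅ h2 = h2 by rewrite -gh2 mA eg'.
  by rewrite hdef mDr e1 e2.
have he : h ⋅ e = h.
  have e1 : h1 ⋅ e = h1 by rewrite -h1g -mA ge.
  have e2 : h2 ⋅ e = h2 by rewrite -h2g -mA g'e.
  by rewrite hdef mDl e1 e2.
have hg : h ⋅ g = g ⋅ h by rewrite hdef mDl mDr h1g h2g0 gh1 gh20.
have hi : h ⋅ i = i.
  rewrite [in LHS]iE hdef mDl !mDr h1L h2L !mA h1g' h2g0 !m0l addr0 add0r.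
  by rewrite -iE.
have ih : i ⋅ h = i.
  rewrite [in LHS]iE' hdef mDl !mDr h1R h2R -!mA gh20 g'h1 !m0r addr0 add0r.
  by rewrite -iE'.
clear hdef.
have ph : p ⋅ h = h ⋅ p by rewrite pgi mDl mDr ih hi hg.
have hAh : h ⋅ (h ⋅ p) ⋅ h = h ⋅ p by rewrite !mA hh -mA ph mA hh.
have hl2 : forall z, z \in [:: h; h ⋅ p] -> J z.
  by move=> z; rewrite !inE => /orP [] /eqP ->; [ | apply: JMr].
have [V [hV VJ sV [k5 [[Vk5 k5id] urV]]]] := lurJ hl2.
have Vh : V h by apply: sV; rewrite !inE eqxx.
have VA : V (h ⋅ p) by apply: sV; rewrite !inE eqxx orbT.
have [W [W' [VW VW' hWh hW'h [WW'1 W'W1 AWA]]]] := corner_ur hV (conj Vk5 k5id) urV Vh hh VA hAh.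
have JW : J W by apply: VJ.
have JW' : J W' by apply: VJ.
have Wh : W ⋅ h = W by rewrite -[in LHS]hWh -mA hh hWh.
have hW : h ⋅ W = W by rewrite -[in LHS]hWh !mA hh hWh.
have W'h : W' ⋅ h = W' by rewrite -[in LHS]hW'h -mA hh hW'h.
have hW' : h ⋅ W' = W' by rewrite -[in LHS]hW'h !mA hh hW'h.
have eW : e ⋅ W = W by rewrite -hW mA eh.
have We : W ⋅ e = W by rewrite -Wh -mA he.
have eW' : e ⋅ W' = W' by rewrite -hW' mA eh.
have W'e : W' ⋅ e = W' by rewrite -W'h -mA he.
have [E Edef] : {E | E = e - h} by exists (e - h).
have EE : E ⋅ E = E by rewrite Edef mBl !mBr ee eh he hh subrr subr0.
have WE : W ⋅ E = 0 by rewrite Edef mBr We Wh subrr.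
have W'E : W' ⋅ E = 0 by rewrite Edef mBr W'e W'h subrr.
have EW : E ⋅ W = 0 by rewrite Edef mBl eW hW subrr.
have EW' : E ⋅ W' = 0 by rewrite Edef mBl eW' hW' subrr.
have [w wdef] : {w | w = W + E} by exists (W + E).
have [w' w'def] : {w' | w' = W' + E} by exists (W' + E).
have ww' : w ⋅ w' = e.
  rewrite wdef w'def mDl !mDr WW'1 EE WE EW' addr0 add0r.
  by rewrite Edef addrC subrK.
have w'w : w' ⋅ w = e.
  rewrite wdef w'def mDl !mDr W'W1 EE W'E EW addr0 add0r.
  by rewrite Edef addrC subrK.
have ghg : g ⋅ h ⋅ g = g ⋅ h by rewrite -mA hg mA gg.
have ghi : g ⋅ h ⋅ i = g ⋅ i by rewrite -mA hi.
have d1 : p - h ⋅ p = g - g ⋅ h.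
  by rewrite pgi mDr hi hg opprD addrACA subrr addr0.
have d2 : (g - g ⋅ h) ⋅ p = g - g ⋅ h.
  by rewrite pgi mBl !mDr gg ghg ghi opprD addrACA subrr addr0.
have hp : h ⋅ p = g ⋅ h + i by rewrite pgi mDr hg hi.
have pwp : p ⋅ w ⋅ p = p.
  rewrite mA in AWA.
  have t1 : p ⋅ W ⋅ p = h ⋅ p by rewrite -[W]hWh !mA ph AWA.
  have t2 : p ⋅ E ⋅ p = g - g ⋅ h by rewrite Edef mBr pe ph d1 d2.
  rewrite wdef mDr mDl t1 t2 hp [RHS]pgi.
  by rewrite addrC addrA subrK.
have we : w ⋅ e = w by rewrite wdef Edef mDl mBl We ee he.
have w'e : w' ⋅ e = w' by rewrite w'def Edef mDl mBl W'e ee he.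
have ew' : e ⋅ w' = w' by rewrite w'def Edef mDr mBr eW' ee eh.
have pw : pi w = pi e.
  by rewrite wdef Edef piD piB (proj2 (piK W) JW) (proj2 (piK h) Jh) add0r subr0.
have pw' : pi w' = pi e.
  by rewrite w'def Edef piD piB (proj2 (piK W') JW') (proj2 (piK h) Jh) add0r subr0.
exists (u1 ⋅ w), (w' ⋅ v1); split.
- split; first by rewrite mA eu1 -mA we.
  by rewrite piM pu1 pw Wbe.
- split; first by rewrite !mA ew' -mA v1e.
  by rewrite piM pv1 pw' eWb'.
- by rewrite mA (lext ww') u1e.
- by rewrite mA (lext v1u1) w'e w'w.
- have := congr1 (fun z => z ⋅ v1) pwp; rewrite /= pdef !mA (lext u1v1) (lext xe).
  by move=> ->; rewrite (lext u1v1) xe.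
Qed.


Lemma bwd (UL : forall e : R, e ⋅ e = e -> units_lift J e) : locally_unit_regular R.
Proof.
move=> s _.
have [e [ee es]] := idem_unit s.
have [T [hT _ sT [t [[Tt tid] ur]]]] :=
  @lurQ (pi e :: [seq pi a | a <- s]) (fun _ _ => I).
have Te : T (pi e) by apply: sT; rewrite inE eqxx.
have Ta a : a \in s -> T (pi a).
  by move=> ha; apply: sT; rewrite inE; apply/orP; right; apply: map_f.
pose S := fun r => e ⋅ r ⋅ e = r /\ T (pi r).
exists S; split.
- split.
  + by split; [rewrite m0r m0l | rewrite pi0; apply: sub_0].
  + move=> a b [ha Ta'] [hb Tb]; split; first by rewrite mDr mDl ha hb.
    by rewrite piD; exact: (sub_D hT Ta' Tb).
  + move=> c a [ha Ta']; split; first by rewrite nua_mulZr nua_mulZl ha.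
    by rewrite piZ; exact: (sub_Z _ hT Ta').
  + move=> a b [ha Ta'] [hb Tb]; split.
      have ea : e ⋅ a = a by rewrite -[in LHS]ha !mA ee ha.
      have be : b ⋅ e = b by rewrite -[in LHS]hb -mA ee hb.
      by rewrite mA ea -mA be.
    by rewrite piM; exact: (sub_M hT Ta' Tb).
- by [].
- move=> a ha; have [h1 h2] := es a ha; split; first by rewrite h1 h2.
  exact: Ta.
- exists e; split.
  + split; first by split; [rewrite !ee | ].
    move=> z [hz _]; split.
      by rewrite -[in LHS]hz !mA ee hz.
    by rewrite -[in LHS]hz -mA ee hz.
  + move=> x [hx Tx]; exact: (core UL ee hT Tt tid ur Te hx Tx).
Qed.

Lemma fwd : locally_unit_regular R -> forall e : R, e ⋅ e = e -> units_lift J e.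
Proof.
move=> lur e ee x y [rx hx] [ry hy] [j1 [Jj1 hj1]] _.
have [S [hS _ sS [f [[Sf fid] ur]]]] := @lur [:: e; x] (fun _ _ => I).
have Se : S e by apply: sS; rewrite inE eqxx.
have Sx : S x by apply: sS; rewrite !inE eqxx orbT.
have exe : e ⋅ x ⋅ e = x by rewrite hx !mA ee (lext ee).
have ex : e ⋅ x = x by rewrite -[in LHS]exe !mA ee exe.
have xe : x ⋅ e = x by rewrite -[in LHS]exe -mA ee exe.
have [W [W' [SW SW' eWe eW'e [WW' W'W xWx]]]] := corner_ur hS (conj Sf fid) ur Se ee Sx exe.
have We : W ⋅ e = W by rewrite -[in LHS]eWe -mA ee eWe.
have eW' : e ⋅ W' = W' by rewrite -[in LHS]eW'e !mA ee eW'e.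
have W'e : W' ⋅ e = W' by rewrite -[in LHS]eW'e -mA ee eW'e.
exists W', W; split.
- by exists W'; rewrite eW'e.
- by exists W; rewrite eWe.
- exact: W'W.
- exact: WW'.
exists (- ((e - x ⋅ W) ⋅ j1 ⋅ W')); split.
  by apply: JN; apply: JMr; apply: JMl.
have [z zdef] : {z | z = e - x ⋅ W} by exists (e - x ⋅ W).
have ez : e ⋅ z = z by rewrite zdef mBr ee mA ex.
have ze : z ⋅ e = z by rewrite zdef mBl ee -mA We.
have zx : z ⋅ x = 0 by rewrite zdef mBl ex xWx subrr.
have zW' : z ⋅ W' = W' - x by rewrite zdef mBl eW' (lext WW') xe.
have eE : e = x ⋅ y - e ⋅ j1 ⋅ e by rewrite -hj1 opprB addrC subrK.
have zz : z = - (z ⋅ j1 ⋅ e).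
  have := congr1 (fun w => z ⋅ w) eE.
  rewrite /= ze mBr !mA zx m0l sub0r ze.
  by move=> h.
rewrite -zdef mNr mNl !mA ez (lext W'e) -zW' {1}zz mNl (lext eW').
done.
Qed.

End Main.

Theorem proposition5p3 (K : fieldType) (R : nualg K) (J : R -> Prop)
    (Q : nualg K) (pi : R -> Q) :
  is_ideal J -> is_quotient_map J pi ->
  locally_unit_regular_in J -> locally_unit_regular Q ->
  (locally_unit_regular R <->
     forall e : R, e ⋅ e = e -> units_lift J e).
Proof.
move=> hJ hpi lJ lQ; split.
- exact: (@fwd K R J hJ).
- exact: (@bwd K R J Q pi hJ hpi lJ lQ).
Qed.
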